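(* Let $(A,B)$ be a Katsura pair such that $A$ has no zero rows. If the associated action-restriction pair $(\mathbb{Z}\times E_A^0,E_A)$ is contracting, then it is regular.
   Context: Katsura pair: $N\in\mathbb{N}$, $A\in M_N(\mathbb{N})$ (nonnegative integers), $B\in M_N(\mathbb{Z})$ with $A_{ij}=0\Rightarrow B_{ij}=0$. Graph $E_A$: vertices $\{1,\dots,N\}$, edges $e_{i,j,m}$ ($0\le m<A_{ij}$), $r=i$, $s=j$. The action-restriction pair $(\mathbb{Z}\times E_A^0,E_A)$: the group bundle with elements $a_i^k$ ($a_i^ka_i^l=a_i^{k+l}$, unit $a_i^0$) acts by $a_i^k\cdot e_{i,j,m}=e_{i,j,\hat m}$, $a_i^k|_{e_{i,j,m}}=a_j^{\hat k}$ where $kB_{ij}+m=\hat kA_{ij}+\hat m$, $0\le\hat m<A_{ij}$, extended to finite paths by $g\cdot(e\nu)=(g\cdot e)(g|_e\cdot\nu)$, $g|_{e\nu}=(g|_e)|_\nu$ (the action need not be faithful). Contracting: there is a finite $F$ such that for every $g$ there is $n$ with $g|_\mu\in F$ for all paths $\mu$ of length $\ge n$ with range $d(g)$. Regular: for every $g$ there is $K$ such that $g\cdot\mu=\mu$ and $|\mu|\ge K$ imply $g|_\mu=a^0_{s(\mu)}$. *)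

(* Defs.v *)
From mathcomp Require Import all_boot all_order all_algebra.
Set Implicit Arguments. Unset Strict Implicit. Unset Printing Implicit Defensive.
Import Order.TTheory GRing.Theory Num.Theory.
Local Open Scope ring_scope.

Section Katsura.
Variable N : nat.
Variable A : 'M[nat]_N.
Variable B : 'M[int]_N.

Definition katsura_pair : Prop := forall i j, A i j = 0%N -> B i j = 0.

Definition no_zero_rows : Prop := forall i, exists j, A i j != 0%N.

(* An edge e_{i,j,m} of E_A is encoded as the triple (i, j, m) with m < A_ij;
   r(e) = i, s(e) = j. *)
Definition edge := ('I_N * 'I_N * nat)%type.
Definition e_r (e : edge) : 'I_N := e.1.1.
Definition e_s (e : edge) : 'I_N := e.1.2.
Definition e_m (e : edge) : nat := e.2.
Definition valid_edge (e : edge) : bool := (e_m e < A (e_r e) (e_s e))%N.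

(* Finite paths e_1 e_2 ... e_n with range i: r(e_1) = i and s(e_k) = r(e_{k+1}).
   The empty sequence is the vertex (length-0 path) i. *)
Fixpoint is_path (i : 'I_N) (p : seq edge) : bool :=
  match p with
  | [::] => true
  | e :: p' => [&& e_r e == i, valid_edge e & is_path (e_s e) p']
  end.

Definition p_s (i : 'I_N) (p : seq edge) : 'I_N := last i (map e_s p).

(* The group-bundle element a_i^k is encoded as the pair (k, i); d(a_i^k) = i. *)
Definition gelt := (int * 'I_N)%type.

(* a_i^k . e_{i,j,m} = e_{i,j,mh},  a_i^k|_{e_{i,j,m}} = a_j^{kh},
   where k B_ij + m = kh A_ij + mh, 0 <= mh < A_ij. *)
Definition act_edge (k : int) (e : edge) : edge * int :=
  let x := k * B (e_r e) (e_s e) + (e_m e)%:Z in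
  let a := (A (e_r e) (e_s e))%:Z in
  ((e_r e, e_s e, `|(x %% a)%Z|%N), (x %/ a)%Z).

(* g.(e nu) = (g.e)(g|_e . nu),  g|_{e nu} = (g|_e)|_nu; returns the pair
   (g . p, exponent of g|_p). *)
Fixpoint act_path (k : int) (p : seq edge) : seq edge * int :=
  match p with
  | [::] => ([::], k)
  | e :: p' => let ek := act_edge k e in
               let pk := act_path ek.2 p' in
               (ek.1 :: pk.1, pk.2)
  end.

Definition act (g : gelt) (p : seq edge) : seq edge := (act_path g.1 p).1.
Definition restr (g : gelt) (p : seq edge) : gelt :=
  ((act_path g.1 p).2, p_s g.2 p).

Definition contracting : Prop :=
  exists F : seq gelt, forall g : gelt, exists n : nat,
    forall p : seq edge, is_path g.2 p -> (n <= size p)%N -> restr g p \in F.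

Definition regular : Prop :=
  forall g : gelt, exists K : nat,
    forall p : seq edge, is_path g.2 p -> act g p = p -> (K <= size p)%N ->
      restr g p = (0, p_s g.2 p).

End Katsura.

(* Main.v *)
Require Import Defs.
From mathcomp Require Import all_boot all_order all_algebra.
From mathcomp Require Import zify.
Import Order.TTheory GRing.Theory Num.Theory.
Local Open Scope ring_scope.

Lemma edge_scale (N : nat) (A : 'M[nat]_N) (B : 'M[int]_N) (c k : int) (e : edge N) :
  valid_edge A e -> (act_edge A B k e).1 = e ->
  act_edge A B (c * k) e = (e, c * (act_edge A B k e).2)%R.
Proof.
case: e => [[r s] m]; rewrite /valid_edge /act_edge /e_r /e_s /e_m /= => Hv [Hm].
set a := (A r s)%:Z.
have a0 : a != 0%R by rewrite /a eqz_nat -lt0n; apply: leq_ltn_trans Hv.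
set x := (k * B r s + m%:Z)%R.
have Hxm : (x %% a)%Z = m%:Z by rewrite -Hm gez0_abs // modz_ge0.
have Hx : (k * B r s = (x %/ a)%Z * a)%R.
  by have := divz_eq x a; rewrite Hxm {1}/x => /addIr.
have E : (c * k * B r s + m%:Z = (c * (x %/ a)%Z) * a + m%:Z)%R.
  by rewrite -mulrA Hx mulrA.
have Hsm : (0 <= m%:Z < a)%R by rewrite /a ltz_nat Hv.
rewrite E divzMDl // (divz_small (m := m%:Z)); last by rewrite gez0_abs.
rewrite addr0 modzMDl modz_small //.
Qed.

Lemma fix_scale (N : nat) (A : 'M[nat]_N) (B : 'M[int]_N) (c : int) :
  forall p i k, is_path A i p -> (act_path A B k p).1 = p ->
  act_path A B (c * k) p = (p, c * (act_path A B k p).2)%R.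
Proof.
elim=> [|e p IH] i k //.
rewrite [is_path _ _ _]/= => /and3P [_ Hv Hp].
rewrite [act_path _ _ k _]/= => -[He Hfix].
have He' : (act_edge A B k e).1 = e by [].
rewrite -[act_path _ _ (c * k) _]/(((act_edge A B (c*k) e).1 :: (act_path A B (act_edge A B (c*k) e).2 p).1, (act_path A B (act_edge A B (c*k) e).2 p).2)).
rewrite (@edge_scale _ A B c k e Hv He') /= (IH (e_s e)) //.
Qed.

Theorem proposition3p6 (N : nat) (A : 'M[nat]_N) (B : 'M[int]_N) :
  katsura_pair A B -> no_zero_rows A -> contracting A B -> regular A B.
Proof.
move=> _ _ [F HF] [k i].
set M := \max_(f <- F) `|f.1|%N.
have [n Hn] := HF ((M.+1)%:Z * k, i)%R.
exists n => p Hp Hfix Hlen.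
have := Hn p Hp Hlen.
rewrite /restr /= (@fix_scale _ A B _ p i k Hp Hfix) /= => HinF.
have H : (`|((M.+1)%:Z * (act_path A B k p).2)%R| <= M)%N.
  exact: (@leq_bigmax_seq _ F (fun _ => true) (fun f : gelt N => `|f.1|%N) _ HinF isT).
move: H; rewrite abszM absz_nat => H.
have H0 : `|(act_path A B k p).2|%N = 0%N.
  move: H; case: (`|_|%N) => // q; nia.
congr (_, _); apply/eqP; rewrite -absz_eq0; exact/eqP.
Qed.
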